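(* A perfect Euler cuboid exists if and only if there exist integers $a,b,c,u$ with $c>0$, $0<u/c<1$ and $(a/c,\,b/c)\in D_{ab}$ satisfying the homogeneous Diophantine equation of degree $12$ $$\begin{aligned}&u^4a^4b^4+6a^4u^2b^4c^2-2u^4a^4b^2c^2-2u^4a^2b^4c^2+4u^2b^4a^2c^4+4a^4u^2b^2c^4-12u^4a^2b^2c^4\\&+u^4a^4c^4+u^4b^4c^4+a^4b^4c^4+6a^4u^2c^6+6u^2b^4c^6-8a^2b^2u^2c^6-2u^4a^2c^6-2u^4b^2c^6\\&-2a^4b^2c^6-2b^4a^2c^6+u^4c^8+b^4c^8+a^4c^8+4a^2u^2c^8+4b^2u^2c^8-12b^2a^2c^8\\&+6u^2c^{10}-2a^2c^{10}-2b^2c^{10}+c^{12}=0.\end{aligned}$$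
   Context: An Euler cuboid is a rectangular parallelepiped whose three edge lengths and three face diagonal lengths are all positive integers; a perfect Euler cuboid is an Euler cuboid whose space diagonal also has integer length, i.e. a $7$-tuple of positive integers $(a,b,c,\alpha,\beta,\gamma,d)$ with $a^2+b^2=\gamma^2$, $b^2+c^2=\alpha^2$, $c^2+a^2=\beta^2$, $a^2+b^2+c^2=d^2$ (these letters are unrelated to the integer unknowns $a,b,c,u$ of the claim). Let $D_{uz}=\{(u,z)\in\mathbb{R}^2: 0<u<1,\ 0<z<1\}$. Define $f\colon D_{uz}\to\mathbb{R}^2$ by $f(u,z)=(a(u,z),b(u,z))$, where $a(u,z)$ and $b(u,z)$ are the positive real numbers determined by $$a^2=\frac{u^2+z^2}{u^2z^2+1},\qquad b^2=\frac{(1+u^2)(1+z^2)-2z(1-u^2)}{(1+u^2)(1+z^2)+2z(1-u^2)}$$ (both right-hand sides are positive on $D_{uz}$), and let $D_{ab}=f(D_{uz})$. *)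

(* Defs.v *)
From Stdlib Require Import Reals ZArith Lra Lia.
Open Scope R_scope.

Definition perfect_euler_cuboid (a b c al be ga d : Z) : Prop :=
  (0 < a)%Z /\ (0 < b)%Z /\ (0 < c)%Z /\ (0 < al)%Z /\ (0 < be)%Z /\
  (0 < ga)%Z /\ (0 < d)%Z /\
  (a*a + b*b = ga*ga)%Z /\ (b*b + c*c = al*al)%Z /\
  (c*c + a*a = be*be)%Z /\ (a*a + b*b + c*c = d*d)%Z.

Definition perfect_euler_cuboid_exists : Prop :=
  exists a b c al be ga d : Z, perfect_euler_cuboid a b c al be ga d.

(* the map f : D_uz -> R^2, components are the positive square roots *)
Definition fa (u z : R) : R := sqrt ((u^2 + z^2) / (u^2 * z^2 + 1)).
Definition fb (u z : R) : R :=
  sqrt (((1 + u^2) * (1 + z^2) - 2 * z * (1 - u^2)) /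
        ((1 + u^2) * (1 + z^2) + 2 * z * (1 - u^2))).

Definition in_Duz (u z : R) : Prop := 0 < u < 1 /\ 0 < z < 1.

Definition in_Dab (x y : R) : Prop :=
  exists u z : R, in_Duz u z /\ x = fa u z /\ y = fb u z.

Open Scope Z_scope.
Definition P12 (a b c u : Z) : Z :=
  u^4*a^4*b^4 + 6*a^4*u^2*b^4*c^2 - 2*u^4*a^4*b^2*c^2 - 2*u^4*a^2*b^4*c^2
  + 4*u^2*b^4*a^2*c^4 + 4*a^4*u^2*b^2*c^4 - 12*u^4*a^2*b^2*c^4
  + u^4*a^4*c^4 + u^4*b^4*c^4 + a^4*b^4*c^4 + 6*a^4*u^2*c^6 + 6*u^2*b^4*c^6
  - 8*a^2*b^2*u^2*c^6 - 2*u^4*a^2*c^6 - 2*u^4*b^2*c^6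
  - 2*a^4*b^2*c^6 - 2*b^4*a^2*c^6 + u^4*c^8 + b^4*c^8 + a^4*c^8
  + 4*a^2*u^2*c^8 + 4*b^2*u^2*c^8 - 12*b^2*a^2*c^8
  + 6*u^2*c^10 - 2*a^2*c^10 - 2*b^2*c^10 + c^12.
Close Scope Z_scope.

(* Main.v *)
Require Import Defs.
From Stdlib Require Import Reals ZArith Lra Lia Psatz.
Open Scope R_scope.

Lemma frac01 x y : 0 < x -> x < y -> 0 < x / y < 1.
Proof.
  intros Hx Hxy. split.
  - apply Rdiv_lt_0_compat; lra.
  - apply Rmult_lt_reg_r with y; [lra|]. unfold Rdiv.
    rewrite Rmult_assoc, Rinv_l by lra. lra.
Qed.

Lemma sqrt01 q : 0 < q < 1 -> 0 < sqrt q < 1.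
Proof.
  intros H. split; [apply sqrt_lt_R0; lra|].
  rewrite <- sqrt_1. apply sqrt_lt_1_alt. lra.
Qed.

Lemma fa_bounds u z : in_Duz u z -> 0 < fa u z < 1.
Proof.
  intros [[Hu1 Hu2] [Hz1 Hz2]]. unfold fa. apply sqrt01, frac01.
  - nra.
  - assert (0 < (1-u^2)*(1-z^2)) by (apply Rmult_lt_0_compat; nra). nra.
Qed.

Lemma fb_bounds u z : in_Duz u z -> 0 < fb u z < 1.
Proof.
  intros [[Hu1 Hu2] [Hz1 Hz2]]. unfold fb. apply sqrt01, frac01.
  - assert (2*z <= 1 + z^2) by nra.
    assert ((1+u^2)*(2*z) <= (1+u^2)*(1+z^2)) by (apply Rmult_le_compat_l; nra).
    assert (0 < z*u^2) by (apply Rmult_lt_0_compat; nra).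
    nra.
  - assert (0 < 1 - u^2) by nra.
    assert (0 < 2*z*(1-u^2)) by (apply Rmult_lt_0_compat; lra). lra.
Qed.

Lemma half_angle c s t : c^2 + s^2 = t^2 -> 0 < t -> 0 < t + c ->
  (1 - (s/(t+c))^2)/(1 + (s/(t+c))^2) = c/t /\
  2*(s/(t+c))/(1 + (s/(t+c))^2) = s/t.
Proof.
  intros H Ht Htc.
  assert (E : (s/(t+c))^2 = (t-c)/(t+c)).
  { unfold Rdiv. rewrite Rpow_mult_distr.
    replace (s^2) with ((t-c)*(t+c)) by nra.
    field. lra. }
  rewrite E. split.
  - field. split; lra.
  - field. split; lra.
Qed.

Lemma L1a u z :
  (u^2 + z^2) / (u^2*z^2 + 1) =
  (1 - (1-u^2)/(1+u^2) * ((1-z^2)/(1+z^2))) / (1 + (1-u^2)/(1+u^2) * ((1-z^2)/(1+z^2))).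
Proof.
  assert (0 < 1 + u^2) by nra. assert (0 < 1 + z^2) by nra.
  assert (0 < u^2*z^2+1) by nra.
  field; repeat split; try lra; try nra.
Qed.

Lemma L1b u z : 0 < (1+u^2)*(1+z^2) + 2*z*(1-u^2) ->
  ((1 + u^2) * (1 + z^2) - 2 * z * (1 - u^2)) /
        ((1 + u^2) * (1 + z^2) + 2 * z * (1 - u^2)) =
  (1 - (1-u^2)/(1+u^2) * (2*z/(1+z^2))) / (1 + (1-u^2)/(1+u^2) * (2*z/(1+z^2))).
Proof.
  intro Hp.
  assert (0 < 1 + u^2) by nra. assert (0 < 1 + z^2) by nra.
  field; repeat split; try lra; try nra.
Qed.

Lemma fwd_real x1 x2 x3 g d al be :
  0 < x1 -> 0 < x2 -> 0 < x3 -> 0 < g -> 0 < d -> 0 < al -> 0 < be ->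
  x1^2 + x2^2 = g^2 -> g^2 + x3^2 = d^2 -> al^2 = d^2 - x1^2 -> be^2 = d^2 - x2^2 ->
  in_Duz (x3/(d+g)) (x2/(g+x1)) /\ fa (x3/(d+g)) (x2/(g+x1)) = (d-x1)/al /\
  fb (x3/(d+g)) (x2/(g+x1)) = (d-x2)/be.
Proof.
  intros P1 P2 P3 Pg Pd Pa Pb K H2 Ha Hb.
  destruct (half_angle g x3 d) as [CA SA]; try lra.
  destruct (half_angle x1 x2 g) as [CZ SZ]; try lra.
  assert (x3 < d) by nra. assert (x2 < g) by nra.
  assert (x1 < d) by nra. assert (x2 < d) by nra.
  split; [|split].
  - split; apply frac01; lra.
  - unfold fa. rewrite L1a, CA, CZ.
    replace ((d-x1)/al) with (sqrt (((d-x1)/al)^2)) by (apply sqrt_pow2; apply Rlt_le, Rdiv_lt_0_compat; lra).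
    f_equal.
    replace (((d-x1)/al)^2) with ((d-x1)^2/(d^2-x1^2)) by (rewrite <- Ha; field; lra).
    field. repeat split; try lra; nra.
  - unfold fb. rewrite L1b, CA, SZ.
    + replace ((d-x2)/be) with (sqrt (((d-x2)/be)^2)) by (apply sqrt_pow2; apply Rlt_le, Rdiv_lt_0_compat; lra).
      f_equal.
      replace (((d-x2)/be)^2) with ((d-x2)^2/(d^2-x2^2)) by (rewrite <- Hb; field; lra).
      field. repeat split; try lra; nra.
    + set (z := x2/(g+x1)). set (u := x3/(d+g)).
      assert (0 < z) by (apply Rdiv_lt_0_compat; lra).
      assert (0 < u < 1) by (apply frac01; lra).
      assert (0 < 1 - u^2) by nra.
      assert (0 < 2*z*(1-u^2)) by (apply Rmult_lt_0_compat; lra).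
      nra.
Qed.

Open Scope Z_scope.
Lemma P12_eq a b c u : P12 a b c u =
  ((c^2-a^2)*(c^2+b^2)*(c^2+u^2))^2 + ((c^2-b^2)*(c^2+a^2)*(c^2+u^2))^2
  - ((c^2-u^2)*(c^2+a^2)*(c^2+b^2))^2.
Proof. unfold P12. ring. Qed.

Lemma fwd_Z a b c al be g d : a*a+b*b=g*g -> b*b+c*c=al*al -> c*c+a*a=be*be ->
  a*a+b*b+c*c=d*d ->
  P12 ((d-a)*be*(d+g)) ((d-b)*al*(d+g)) (al*be*(d+g)) (c*al*be) = 0.
Proof.
  intros K H1 H2 H3.
  assert (Eal : al*al = d*d - a*a) by lia.
  assert (Ebe : be*be = d*d - b*b) by lia.
  assert (Ec : c*c = d*d - g*g) by lia.
  rewrite P12_eq.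
  assert (e1 : (al*be*(d+g))^2 - ((d-a)*be*(d+g))^2 = be^2*(d+g)^2*(2*a*(d-a))).
  { transitivity (be^2*(d+g)^2*(al*al - (d-a)^2)); [ring| rewrite Eal; ring]. }
  assert (e2 : (al*be*(d+g))^2 + ((d-a)*be*(d+g))^2 = be^2*(d+g)^2*(2*d*(d-a))).
  { transitivity (be^2*(d+g)^2*(al*al + (d-a)^2)); [ring| rewrite Eal; ring]. }
  assert (e3 : (al*be*(d+g))^2 - ((d-b)*al*(d+g))^2 = al^2*(d+g)^2*(2*b*(d-b))).
  { transitivity (al^2*(d+g)^2*(be*be - (d-b)^2)); [ring| rewrite Ebe; ring]. }
  assert (e4 : (al*be*(d+g))^2 + ((d-b)*al*(d+g))^2 = al^2*(d+g)^2*(2*d*(d-b))).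
  { transitivity (al^2*(d+g)^2*(be*be + (d-b)^2)); [ring| rewrite Ebe; ring]. }
  assert (e5 : (al*be*(d+g))^2 - (c*al*be)^2 = al^2*be^2*(2*g*(d+g))).
  { transitivity (al^2*be^2*((d+g)^2 - c*c)); [ring| rewrite Ec; ring]. }
  assert (e6 : (al*be*(d+g))^2 + (c*al*be)^2 = al^2*be^2*(2*d*(d+g))).
  { transitivity (al^2*be^2*((d+g)^2 + c*c)); [ring| rewrite Ec; ring]. }
  rewrite e1, e2, e3, e4, e5, e6.
  transitivity ((8*d^2*al^4*be^4*(d+g)^5*(d-a)*(d-b))^2 * (a*a+b*b-g*g)); [ring|].
  rewrite K. ring.
Qed.

Lemma conv_Z a b c u : 0 < a < c -> 0 < b < c -> 0 < u < c -> P12 a b c u = 0 ->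
  perfect_euler_cuboid_exists.
Proof.
  intros Ha Hb Hu HP. revert HP.
  assert (pa : 0 < c^2-a^2) by (replace (c^2-a^2) with ((c-a)*(c+a)) by ring; apply Z.mul_pos_pos; lia).
  assert (pb : 0 < c^2-b^2) by (replace (c^2-b^2) with ((c-b)*(c+b)) by ring; apply Z.mul_pos_pos; lia).
  assert (pu : 0 < c^2-u^2) by (replace (c^2-u^2) with ((c-u)*(c+u)) by ring; apply Z.mul_pos_pos; lia).
  assert (c2 : 0 < c^2) by (rewrite Z.pow_2_r; apply Z.mul_pos_pos; lia).
  assert (qa : 0 < c^2+a^2) by (pose proof (Z.square_nonneg a); rewrite Z.pow_2_r in *; lia).
  assert (qb : 0 < c^2+b^2) by (pose proof (Z.square_nonneg b); rewrite Z.pow_2_r in *; lia).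
  assert (qu : 0 < c^2+u^2) by (pose proof (Z.square_nonneg u); rewrite Z.pow_2_r in *; lia).
  intro HP. rewrite P12_eq in HP.
  exists ((c^2-a^2)*(c^2+b^2)*(c^2+u^2)), ((c^2-b^2)*(c^2+a^2)*(c^2+u^2)),
    (2*u*c*(c^2+a^2)*(c^2+b^2)), (2*a*c*(c^2+b^2)*(c^2+u^2)),
    (2*b*c*(c^2+a^2)*(c^2+u^2)), ((c^2-u^2)*(c^2+a^2)*(c^2+b^2)),
    ((c^2+a^2)*(c^2+b^2)*(c^2+u^2)).
  assert (I1 : ((c^2-u^2)*(c^2+a^2)*(c^2+b^2))^2 + (2*u*c*(c^2+a^2)*(c^2+b^2))^2
     = ((c^2+a^2)*(c^2+b^2)*(c^2+u^2))^2) by ring.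
  assert (I2 : ((c^2-a^2)*(c^2+b^2)*(c^2+u^2))^2 + (2*a*c*(c^2+b^2)*(c^2+u^2))^2
     = ((c^2+a^2)*(c^2+b^2)*(c^2+u^2))^2) by ring.
  assert (I3 : ((c^2-b^2)*(c^2+a^2)*(c^2+u^2))^2 + (2*b*c*(c^2+a^2)*(c^2+u^2))^2
     = ((c^2+a^2)*(c^2+b^2)*(c^2+u^2))^2) by ring.
  assert (P1 : 0 < 2*u*c*(c^2+a^2)*(c^2+b^2)) by (clear HP I1 I2 I3; repeat apply Z.mul_pos_pos; lia).
  assert (P2 : 0 < 2*a*c*(c^2+b^2)*(c^2+u^2)) by (clear HP I1 I2 I3; repeat apply Z.mul_pos_pos; lia).
  assert (P3 : 0 < 2*b*c*(c^2+a^2)*(c^2+u^2)) by (clear HP I1 I2 I3; repeat apply Z.mul_pos_pos; lia).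
  assert (P4 : 0 < (c^2-a^2)*(c^2+b^2)*(c^2+u^2)) by (clear HP I1 I2 I3; repeat apply Z.mul_pos_pos; lia).
  assert (P5 : 0 < (c^2-b^2)*(c^2+a^2)*(c^2+u^2)) by (clear HP I1 I2 I3; repeat apply Z.mul_pos_pos; lia).
  assert (P6 : 0 < (c^2-u^2)*(c^2+a^2)*(c^2+b^2)) by (clear HP I1 I2 I3; repeat apply Z.mul_pos_pos; lia).
  assert (P7 : 0 < (c^2+a^2)*(c^2+b^2)*(c^2+u^2)) by (clear HP I1 I2 I3; repeat apply Z.mul_pos_pos; lia).
  revert HP I1 I2 I3 P1 P2 P3 P4 P5 P6 P7.
  generalize ((c^2-a^2)*(c^2+b^2)*(c^2+u^2)) ((c^2-b^2)*(c^2+a^2)*(c^2+u^2))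
    (2*u*c*(c^2+a^2)*(c^2+b^2)) (2*a*c*(c^2+b^2)*(c^2+u^2))
    (2*b*c*(c^2+a^2)*(c^2+u^2)) ((c^2-u^2)*(c^2+a^2)*(c^2+b^2))
    ((c^2+a^2)*(c^2+b^2)*(c^2+u^2)).
  intros x1 x2 x3 al be g d HP I1 I2 I3 P1 P2 P3 P4 P5 P6 P7.
  clear -HP I1 I2 I3 P1 P2 P3 P4 P5 P6 P7.
  unfold perfect_euler_cuboid. rewrite !Z.pow_2_r in *.
  (repeat split). all: lia.
Qed.

Open Scope R_scope.
Lemma div01_Z a c : (0 < c)%Z -> 0 < IZR a / IZR c < 1 -> (0 < a < c)%Z.
Proof.
  intros Hc H. apply IZR_lt in Hc.
  assert (E : IZR a = IZR a / IZR c * IZR c) by (field; lra).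
  split; apply lt_IZR; rewrite E.
  - apply Rmult_lt_0_compat; lra.
  - apply Rlt_le_trans with (1 * IZR c); [apply Rmult_lt_compat_r; lra | lra].
Qed.

Lemma Zsq_R x y z : (x*x + y*y = z*z)%Z -> IZR x ^2 + IZR y^2 = IZR z^2.
Proof. intro H. apply (f_equal IZR) in H. rewrite plus_IZR, !mult_IZR in H. lra. Qed.

Theorem theorem5p3 :
  perfect_euler_cuboid_exists <->
  exists a b c u : Z,
    (0 < c)%Z /\
    0 < IZR u / IZR c < 1 /\
    in_Dab (IZR a / IZR c) (IZR b / IZR c) /\
    P12 a b c u = 0%Z.
Proof.
  split.
  - intros [a [b [c [al [be [ga [d H]]]]]]].
    destruct H as (pa&pb&pc&pal&pbe&pg&pd&K&H1&H2&H3).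
    exists ((d-a)*be*(d+ga))%Z, ((d-b)*al*(d+ga))%Z, (al*be*(d+ga))%Z, (c*al*be)%Z.
    assert (Kr := Zsq_R a b ga K).
    assert (H2r := Zsq_R ga c d ltac:(lia)).
    assert (Har := Zsq_R al a d ltac:(lia)).
    assert (Hbr := Zsq_R be b d ltac:(lia)).
    apply (IZR_lt 0) in pa, pb, pc, pal, pbe, pg, pd.
    destruct (fwd_real (IZR a) (IZR b) (IZR c) (IZR ga) (IZR d) (IZR al) (IZR be))
      as [HD [Fa Fb]]; try lra.
    split; [|split; [|split]].
    + apply lt_IZR. rewrite !mult_IZR, plus_IZR.
      apply Rmult_lt_0_compat; [apply Rmult_lt_0_compat|]; lra.
    + replace (IZR (c*al*be) / IZR (al*be*(d+ga))) with (IZR c / (IZR d + IZR ga)).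
      * apply HD.
      * rewrite !mult_IZR, plus_IZR. field. lra.
    + exists (IZR c / (IZR d + IZR ga)), (IZR b / (IZR ga + IZR a)).
      split; [exact HD|]. rewrite Fa, Fb.
      rewrite !mult_IZR, !plus_IZR, !minus_IZR. split; field; lra.
    + apply fwd_Z; lia.
  - intros [a [b [c [u [Hc [Hu [[u1 [z1 [Hd [Ea Eb]]]] HP]]]]]]].
    apply (conv_Z a b c u); try assumption.
    + apply div01_Z; auto. rewrite Ea. apply fa_bounds; auto.
    + apply div01_Z; auto. rewrite Eb. apply fb_bounds; auto.
    + apply div01_Z; auto.
Qed.
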